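(* Let $\Xi^\natural=\frac12\big(\sum_{i\in[p]}S^\natural_{ii}-\sum_{i\in p+[q]}S^\natural_{ii}\big)\in S^2(\mathfrak o_n)$ and $\Xi=\Phi^{-1}(\Xi^\natural)\in S^2(\mathfrak g)$. Then $$\gamma_2(\Xi)=\Omega_{\mathfrak o_p}-\Omega_{\mathfrak o_q}-\frac{p-q}{p+q}\Omega_{\mathfrak g}.$$
   Context: Let $n=p+q$, $I_{p,q}=\mathrm{diag}(1_p,-1_q)$, $\mathfrak g=\{X\in\mathfrak{gl}_n(\mathbb C):{}^tXI_{p,q}+I_{p,q}X=0\}$, $\mathfrak o_n=\{X\in\mathfrak{gl}_n(\mathbb C):{}^tX+X=0\}$. Write $[p]=\{1,\dots,p\}$, $p+[q]=\{p+1,\dots,n\}$, $\epsilon_i=1$ for $i\in[p]$ and $-1$ otherwise. Put $X_{i,j}=\epsilon_jE_{i,j}-\epsilon_iE_{j,i}\in\mathfrak g$ and $M_{i,j}=E_{i,j}-E_{j,i}\in\mathfrak o_n$. Set $X_{i,j}^\vee=-X_{i,j}$ if $i,j\in[p]$ or $i,j\in p+[q]$, and $X_{i,j}^\vee=X_{i,j}$ otherwise. $\Phi:\mathfrak g\to\mathfrak o_n$, $X\mapsto I_{p,q}^{1/2}XI_{p,q}^{-1/2}$ with $I_{p,q}^{1/2}=\mathrm{diag}(1,\dots,1,\sqrt{-1},\dots,\sqrt{-1})$, extended to tensors. $S^2$ is identified with symmetric 2-tensors; $\gamma_2:S^2(\mathfrak g)\to U(\mathfrak g)$ is the restriction of $a\otimes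 b\mapsto ab$. Define $Q^\natural=\sum_{i,k\in[n]}M_{i,k}\otimes M_{k,i}$ and $S^\natural_{ij}=\frac12\sum_{k\in[n]}(M_{i,k}\otimes M_{k,j}+M_{k,j}\otimes M_{i,k})-\frac1n\delta_{i,j}Q^\natural$. Casimir elements: $\Omega_{\mathfrak g}=\sum_{i<j}X_{i,j}X_{i,j}^\vee$, $\Omega_{\mathfrak o_p}=\sum_{i<j,\ i,j\in[p]}X_{i,j}X_{j,i}$, $\Omega_{\mathfrak o_q}=\sum_{i<j,\ i,j\in p+[q]}X_{i,j}X_{j,i}$. *)

(* Defs.v *)
From HB Require Import structures.
From mathcomp Require Import all_boot all_order all_algebra all_field.
Set Implicit Arguments. Unset Strict Implicit. Unset Printing Implicit Defensive.
Import Order.TTheory GRing.Theory Num.Theory.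
Local Open Scope ring_scope.

(* Ground field: algC (algebraically closed, char 0, contains sqrt(-1) = 'i). *)
Notation C := algC.

Section Defs.
Variables p q : nat.
Local Notation n := (p + q)%N.
Local Notation idx := 'I_n.

Definition eps (i : idx) : C := if (i < p)%N then 1 else -1.

Definition Ipq : 'M[C]_n := diag_mx (\row_i eps i).
Definition Ihalf : 'M[C]_n := diag_mx (\row_i (if (i < p)%N then 1 else 'i)).

Definition in_g (X : 'M[C]_n) : bool := X^T *m Ipq + Ipq *m X == 0.

Definition Phi (X : 'M[C]_n) : 'M[C]_n := Ihalf *m X *m invmx Ihalf.
Definition Phiinv (Y : 'M[C]_n) : 'M[C]_n := invmx Ihalf *m Y *m Ihalf.

Definition Xm (i j : idx) : 'M[C]_n :=
  eps j *: delta_mx i j - eps i *: delta_mx j i.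
Definition Mm (i j : idx) : 'M[C]_n := delta_mx i j - delta_mx j i.
Definition Xvee (i j : idx) : 'M[C]_n :=
  if ((i < p) == (j < p))%N then - Xm i j else Xm i j.

(* Formal 2-tensors: finite formal sums  sum_t c_t * (a_t (x) b_t). *)
Definition tens := seq (C * 'M[C]_n * 'M[C]_n).
Definition tscale (c : C) (t : tens) : tens :=
  [seq (c * x.1.1, x.1.2, x.2) | x <- t].
Definition tsum (f : idx -> tens) : tens := flatten [seq f i | i <- enum idx].
Definition tPhiinv (t : tens) : tens :=
  [seq (x.1.1, Phiinv x.1.2, Phiinv x.2) | x <- t].

Definition Qnat : tens :=
  tsum (fun i => tsum (fun k => [:: (1, Mm i k, Mm k i)])).
Definition Snat (i j : idx) : tens :=
  tscale (1/2) (tsum (fun k => [:: (1, Mm i k, Mm k j); (1, Mm k j, Mm i k)]))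
  ++ tscale (- ((i == j)%:R / n%:R)) Qnat.
Definition Xinat : tens :=
  tscale (1/2) (tsum (fun i => if (i < p)%N then Snat i i else [::])
                ++ tscale (-1) (tsum (fun i => if (i < p)%N then [::] else Snat i i))).
Definition Xi : tens := tPhiinv Xinat.

(* gamma_2 composed with a Lie algebra map rho : g -> A:
   a (x) b  |->  rho a * rho b, extended linearly. *)
Definition gamma2 (A : algType C) (rho : 'M[C]_n -> A) (t : tens) : A :=
  \sum_(x <- t) x.1.1 *: (rho x.1.2 * rho x.2).

Definition Omega_g (A : algType C) (rho : 'M[C]_n -> A) : A :=
  \sum_(i : idx) \sum_(j : idx | (i < j)%N) rho (Xm i j) * rho (Xvee i j).
Definition Omega_op (A : algType C) (rho : 'M[C]_n -> A) : A :=
  \sum_(i : idx | (i < p)%N) \sum_(j : idx | (i < j)%N && (j < p)%N)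
     rho (Xm i j) * rho (Xm j i).
Definition Omega_oq (A : algType C) (rho : 'M[C]_n -> A) : A :=
  \sum_(i : idx | (p <= i)%N) \sum_(j : idx | (i < j)%N)
     rho (Xm i j) * rho (Xm j i).

Definition lie_hom (A : algType C) (rho : 'M[C]_n -> A) : Prop :=
  (forall (c : C) X Y, in_g X -> in_g Y -> rho (c *: X + Y) = c *: rho X + rho Y) /\
  (forall X Y, in_g X -> in_g Y ->
     rho (X *m Y - Y *m X) = rho X * rho Y - rho Y * rho X).

End Defs.

(* Main.v *)
Require Import Defs.
From HB Require Import structures.
From mathcomp Require Import all_boot all_order all_algebra all_field.
From mathcomp Require Import ring.
Import Order.TTheory GRing.Theory Num.Theory.
Local Open Scope ring_scope.

Section Mat.
Variables p q : nat.
Local Notation n := (p + q)%N.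

Definition Dinv : 'M[algC]_n := diag_mx (\row_i (if (i < p)%N then 1 else - 'i)).

Lemma Ihalf_inv : invmx (Ihalf p q) = Dinv.
Proof.
have H : Ihalf p q *m Dinv = 1%:M.
  rewrite /Ihalf /Dinv mulmx_diag; apply/matrixP => i j; rewrite !mxE.
  case: (i < p)%N; first by rewrite mul1r.
  by rewrite mulrN -expr2 sqrCi opprK.
have [U _] := mulmx1_unit H.
by rewrite -[invmx _]mulmx1 -H mulmxA mulVmx // mul1mx.
Qed.

Definition cc (i k : 'I_n) : algC :=
  if (i < p)%N then (if (k < p)%N then 1 else - 'i) else (if (k < p)%N then - 'i else -1).

Lemma diag_delta (d : 'rV[algC]_n) (i k : 'I_n) :
  diag_mx d *m delta_mx i k = d 0 i *: delta_mx i k.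
Proof.
rewrite mul_diag_mx; apply/matrixP => a b; rewrite !mxE.
by case: (a =P i) => [->|] //= _; rewrite !mulr0.
Qed.

Lemma delta_diag (d : 'rV[algC]_n) (i k : 'I_n) :
  delta_mx i k *m diag_mx d = d 0 k *: delta_mx i k.
Proof.
rewrite mul_mx_diag; apply/matrixP => a b; rewrite !mxE.
case: (b =P k) => [->|] /=; first by rewrite mulrC.
by rewrite andbF !mulr0 mul0r.
Qed.

Lemma Phiinv_Mm i k : @Phiinv p q (Mm i k) = cc i k *: @Xm p q i k.
Proof.
rewrite /Phiinv Ihalf_inv /Dinv /Ihalf /Mm mulmxBr mulmxBl !diag_delta.
rewrite -!scalemxAl !delta_diag !scalerA /Xm scalerBr !scalerA !mxE /cc /eps.
have ii : 'i * 'i = -1 :> algC by rewrite -expr2 sqrCi.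
case: (i < p)%N; case: (k < p)%N;
 rewrite ?mulr1 ?mul1r ?mulrN ?mulNr ?opprK ?ii ?scaleN1r //.
all: by congr (_ *: _ - _ *: _); rewrite ?mulr1 ?mul1r ?opprK.
Qed.
Lemma in_g_Xm i k : in_g (@Xm p q i k).
Proof.
apply/eqP; rewrite /Xm /Ipq linearB !linearZ /= !trmx_delta.
rewrite !scalerN mulmxDl mulmxDr mulNmx mulmxN -!scalemxAl -!scalemxAr !diag_delta !delta_diag !mxE !scalerA.
rewrite [eps k * eps i]mulrC.
by rewrite -[X in _ + X]opprB subrr.
Qed.
End Mat.

Lemma symsum (V : zmodType) m (f : 'I_m -> 'I_m -> V) :
  (forall i k, f k i = f i k) -> (forall i, f i i = 0) ->
  \sum_(i : 'I_m) \sum_(k : 'I_m) f i k = (\sum_(i : 'I_m) \sum_(k : 'I_m) (if (i < k)%N then f i k else 0)) *+ 2.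
Proof.
move=> fS f0.
have -> : \sum_(i : 'I_m) \sum_(k : 'I_m) f i k = \sum_(i : 'I_m) \sum_(k : 'I_m) ((if (i < k)%N then f i k else 0) + (if (k < i)%N then f i k else 0)).
  apply: eq_bigr => i _; apply: eq_bigr => k _.
  case: (ltngtP i k) => [_|_|e]; rewrite ?addr0 ?add0r //.
  by have -> : k = i by apply: val_inj.
have E : \sum_(i : 'I_m) \sum_(k : 'I_m) (if (k < i)%N then f i k else 0) =
          \sum_(i : 'I_m) \sum_(k : 'I_m) (if (i < k)%N then f i k else 0).
  rewrite exchange_big /=; apply: eq_bigr => i _; apply: eq_bigr => k _.
  by rewrite fS.
rewrite mulr2n -{2}E -big_split /=; apply: eq_bigr => i _; by rewrite -big_split.
Qed.

Lemma final (V : lmodType algC) (X1 X2 P Q T Oop Ooq Og : V) (p q : nat) :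
  X1 - X2 = Q - P -> Oop *+ 2 = - P -> Ooq *+ 2 = - Q -> T = Og *+ 2 ->
  (1/2 : algC) *: ((X1 + ((- (1 / (p + q)%:R)) *: T) *+ p) + (-1) *: (X2 + ((- (1 / (p + q)%:R)) *: T) *+ q))
  = Oop - Ooq - ((p%:R - q%:R) / (p + q)%:R : algC) *: Og.
Proof.
move=> eX eP eQ eT.
have -> : X1 = X2 + (Q - P) by rewrite -eX addrC subrK.
have -> : P = - (Oop *+ 2) by rewrite eP opprK.
have -> : Q = - (Ooq *+ 2) by rewrite eQ opprK.
rewrite eT scaleN1r.
have -> : forall a b c d : V, a + b + c + - (a + d) = b + (c - d).
  by move=> a b c d; rewrite opprD addrACA -addrA addrA [a + b]addrC addrK.
rewrite opprK -!scaler_nat !scalerA -scalerBl !scalerDr scalerN !scalerA.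
have h2 : 1 / 2 * 2 = 1 :> algC by rewrite mul1r mulVf // pnatr_eq0.
rewrite h2 !scale1r [- Ooq + Oop]addrC -scaleNr; congr (_ + _ *: _).
rewrite !mul1r; move: ((p + q)%:R^-1) => x; by field.
Qed.


Section Gam.
Variables (p q : nat) (A : algType algC).
Local Notation n := (p + q)%N.
Implicit Types (f : 'M[algC]_n -> A) (t : tens p q).

Lemma gamma2_cat f s t : gamma2 f (s ++ t) = gamma2 f s + gamma2 f t.
Proof. by rewrite /gamma2 big_cat. Qed.

Lemma gamma2_nil f : gamma2 f ([::] : tens p q) = 0.
Proof. by rewrite /gamma2 big_nil. Qed.

Lemma gamma2_tscale f c t : gamma2 f (tscale c t) = c *: gamma2 f t.
Proof.
rewrite /gamma2 /tscale big_map scaler_sumr; apply: eq_bigr => x _.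
by rewrite scalerA.
Qed.

Lemma gamma2_tsum f (g : 'I_n -> tens p q) :
  gamma2 f (tsum g) = \sum_(i : 'I_n) gamma2 f (g i).
Proof. by rewrite /gamma2 /tsum big_flatten /= big_map big_enum. Qed.

Lemma gamma2_tPhiinv f t :
  gamma2 f (tPhiinv t) = gamma2 (fun X => f (Phiinv X)) t.
Proof. by rewrite /gamma2 /tPhiinv big_map. Qed.
End Gam.

Section Main.
Variables (p q : nat) (A : algType algC) (rho : 'M[algC]_(p + q) -> A).
Hypothesis H : lie_hom rho.
Local Notation n := (p + q)%N.

Lemma in_g0 : in_g (0 : 'M[algC]_n).
Proof. by rewrite /in_g trmx0 mul0mx mulmx0 addr0. Qed.

Lemma rho0 : rho 0 = 0.
Proof.
have := (proj1 H) 1 0 0 in_g0 in_g0; rewrite scale1r addr0 => e.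
by apply: (addrI (rho 0)); rewrite addr0 {3}e scale1r.
Qed.

Lemma rhoZ c X : in_g X -> rho (c *: X) = c *: rho X.
Proof. by move=> gX; have := (proj1 H) c X 0 gX in_g0; rewrite !addr0 rho0 addr0. Qed.

Definition r (i k : 'I_n) := rho (@Xm p q i k).
Definition a (i k : 'I_n) := r i k * r i k.
Definition s (i k : 'I_n) : algC := if (i < p)%N == (k < p)%N then -1 else 1.
Definition W (i k : 'I_n) := s i k *: a i k.

Lemma XmN i k : @Xm p q k i = - @Xm p q i k.
Proof. by rewrite /Xm opprB. Qed.

Lemma rN i k : r k i = - r i k.
Proof. by rewrite /r XmN -scaleN1r rhoZ ?in_g_Xm // scaleN1r. Qed.

Lemma aS i k : a k i = a i k.
Proof. by rewrite /a rN mulrNN. Qed.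

Lemma a0 i : a i i = 0.
Proof. by rewrite /a /r /Xm subrr rho0 mulr0. Qed.

Lemma sS i k : s k i = s i k.
Proof. by rewrite /s eq_sym. Qed.

Lemma WS i k : W k i = W i k.
Proof. by rewrite /W sS aS. Qed.

Lemma W0 i : W i i = 0.
Proof. by rewrite /W a0 scaler0. Qed.

Lemma wW i k : rho (Phiinv (Mm i k)) * rho (Phiinv (Mm k i)) = W i k.
Proof.
rewrite !Phiinv_Mm !rhoZ ?in_g_Xm // -scalerAl -scalerAr scalerA.
rewrite (_ : rho (Xm k i) = - rho (Xm i k)); last exact: rN.
rewrite mulrN scalerN -scaleNr /W /a /r /s /cc.
have ii : 'i * 'i = -1 :> algC by rewrite -expr2 sqrCi.
congr (_ *: _); case: ifP => hi; case: ifP => hk; rewrite ?hi ?hk /= ?mulr1 ?mulrNN ?ii ?opprK /=. all: by rewrite ?mulr1.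
Qed.

Local Notation f := (fun X => rho (Phiinv X)).
Definition T := \sum_(i : 'I_n) \sum_(k : 'I_n) W i k.

Lemma G_Qnat : gamma2 f (Qnat p q) = T.
Proof.
rewrite /Qnat gamma2_tsum; apply: eq_bigr => i _; rewrite gamma2_tsum.
apply: eq_bigr => k _.
by rewrite /gamma2 big_cons big_nil /= scale1r addr0 wW.
Qed.

Lemma G_Snat i : gamma2 f (Snat i i) = \sum_(k : 'I_n) W i k + (- (1 / n%:R)) *: T.
Proof.
rewrite /Snat gamma2_cat !gamma2_tscale G_Qnat eqxx; congr (_ + _).
rewrite gamma2_tsum.
have -> : \sum_(k : 'I_n) gamma2 f [:: (1, Mm i k, Mm k i); (1, Mm k i, Mm i k)]
   = (\sum_(k : 'I_n) W i k) *+ 2.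
  rewrite mulr2n -big_split; apply: eq_bigr => k _.
  by rewrite /gamma2 !big_cons big_nil /= !scale1r addr0 !wW WS.
rewrite -scaler_nat scalerA mul1r mulVf ?scale1r //.
by rewrite pnatr_eq0.
Qed.

Lemma rhoN X : in_g X -> rho (- X) = - rho X.
Proof. by move=> gX; rewrite -scaleN1r rhoZ // scaleN1r. Qed.

Definition U (i : 'I_n) := \sum_(k : 'I_n) W i k.

Lemma G_Xi : gamma2 rho (Xi p q) =
  (1/2 : algC) *: ((\sum_(i < p) U (lshift q i) + ((- (1 / n%:R)) *: T) *+ p)
     + (-1) *: (\sum_(i < q) U (rshift p i) + ((- (1 / n%:R)) *: T) *+ q)).
Proof.
rewrite /Xi gamma2_tPhiinv /Xinat gamma2_tscale gamma2_cat gamma2_tscale !gamma2_tsum.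
congr (_ *: (_ + _ *: _)).
  rewrite big_split_ord /= [X in _ + X]big1 ?addr0; last first.
    move=> i _; rewrite (_ : (rshift p i < p)%N = false) ?gamma2_nil //.
    by rewrite /= ltnNge leq_addr.
  rewrite (eq_bigr (fun i => U (lshift q i) + (- (1 / n%:R)) *: T)); last first.
    move=> i _; rewrite (_ : (lshift q i < p)%N = true) ?G_Snat //. by rewrite /= ltn_ord.
  by rewrite big_split /= sumr_const card_ord.
rewrite big_split_ord /= [X in X + _]big1 ?add0r; last first.
  move=> i _; rewrite (_ : (lshift q i < p)%N = true) ?gamma2_nil //; by rewrite /= ltn_ord.
rewrite (eq_bigr (fun i => U (rshift p i) + (- (1 / n%:R)) *: T)); last first.
  move=> i _; rewrite (_ : (rshift p i < p)%N = false) ?G_Snat //.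
  by rewrite /= ltnNge leq_addr.
by rewrite big_split /= sumr_const card_ord.
Qed.

Lemma Og_eq : T = Omega_g rho *+ 2.
Proof.
rewrite /T (@symsum _ _ W WS W0); congr (_ *+ 2).
rewrite /Omega_g; apply: eq_bigr => i _; rewrite [RHS]big_mkcond /=; apply: eq_bigr => j _.
case: ifP => // _; rewrite /W /s /Xvee /a /r.
case: ifP => _; rewrite ?scaleN1r ?scale1r // rhoN ?in_g_Xm //.
by rewrite mulrN.
Qed.

Definition Vp (i k : 'I_n) := if (i < p)%N && (k < p)%N then a i k else 0.
Definition Vq (i k : 'I_n) := if ~~ (i < p)%N && ~~ (k < p)%N then a i k else 0.
Definition Xc (i k : 'I_n) := if (i < p)%N && ~~ (k < p)%N then a i k else 0.

Lemma VpS i k : Vp k i = Vp i k.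
Proof. by rewrite /Vp andbC aS. Qed.
Lemma Vp0 i : Vp i i = 0.
Proof. by rewrite /Vp a0; case: ifP. Qed.
Lemma VqS i k : Vq k i = Vq i k.
Proof. by rewrite /Vq andbC aS. Qed.
Lemma Vq0 i : Vq i i = 0.
Proof. by rewrite /Vq a0; case: ifP. Qed.

Lemma rr i k : r i k * r k i = - a i k.
Proof. by rewrite (rN i k) mulrN. Qed.

Lemma Op_eq : Omega_op rho *+ 2 = - \sum_(i : 'I_n) \sum_(k : 'I_n) Vp i k.
Proof.
rewrite (@symsum _ _ Vp VpS Vp0) -mulNrn; congr (_ *+ 2).
rewrite /Omega_op -sumrN big_mkcond /=; apply: eq_bigr => i _.
case: ifP => hi; last first.
  rewrite big1 ?oppr0 // => k _; rewrite /Vp hi /=; by case: ifP.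
rewrite big_mkcond -sumrN; apply: eq_bigr => k _.
rewrite /Vp hi /=.
case: (boolP (i < k)%N) => ik; case: (boolP (k < p)%N) => kp /=; rewrite ?oppr0 //.
exact: rr.
Qed.

Lemma Oq_eq : Omega_oq rho *+ 2 = - \sum_(i : 'I_n) \sum_(k : 'I_n) Vq i k.
Proof.
rewrite (@symsum _ _ Vq VqS Vq0) -mulNrn; congr (_ *+ 2).
rewrite /Omega_oq -sumrN big_mkcond /=; apply: eq_bigr => i _.
case: ifP => hi; last first.
  rewrite big1 ?oppr0 // => k _; rewrite /Vq -leqNgt hi /=; by case: ifP.
rewrite big_mkcond -sumrN; apply: eq_bigr => k _.
rewrite /Vq -leqNgt hi /=.
case: (boolP (i < k)%N) => ik /=; rewrite ?oppr0 //.
rewrite -leqNgt (leq_trans hi (ltnW ik)).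
exact: rr.
Qed.

Lemma key : \sum_(i < p) U (lshift q i) - \sum_(i < q) U (rshift p i) =
  \sum_(i : 'I_n) \sum_(k : 'I_n) Vq i k - \sum_(i : 'I_n) \sum_(k : 'I_n) Vp i k.
Proof.
have E : \sum_(i : 'I_n) (if (i < p)%N then U i else - U i) =
    \sum_(i < p) U (lshift q i) - \sum_(i < q) U (rshift p i).
  rewrite big_split_ord /= -sumrN; congr (_ + _); apply: eq_bigr => i _.
    by rewrite (_ : (lshift q i < p)%N = true) // /= ltn_ord.
  by rewrite (_ : (rshift p i < p)%N = false) // /= ltnNge leq_addr.
rewrite -E.
have E2 : \sum_(i : 'I_n) (if (i < p)%N then U i else - U i) =
    \sum_(i : 'I_n) \sum_(k : 'I_n) ((Vq i k - Vp i k) + (Xc i k - Xc k i)).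
  apply: eq_bigr => i _; rewrite /U; case: ifP => hi; rewrite -?sumrN;
  apply: eq_bigr => k _; rewrite /Vq /Vp /Xc /W /s hi /=; case: (boolP (k < p)%N) => hk /=;
  rewrite ?(aS i k) ?scaleN1r ?scale1r ?subr0 ?sub0r ?add0r ?addr0 ?opprK //.
rewrite E2.
have E3 : \sum_(i : 'I_n) \sum_(k : 'I_n) (Xc i k - Xc k i) = 0.
  under eq_bigr do rewrite sumrB.
  by rewrite sumrB [X in _ - X]exchange_big subrr.
under eq_bigr do rewrite big_split /=.
by rewrite big_split /= E3 addr0; under eq_bigr do rewrite sumrB; rewrite sumrB.
Qed.

End Main.

Theorem lemma3p3 (p q : nat) (A : algType algC) (rho : 'M[algC]_(p + q) -> A) :
  lie_hom rho ->
  gamma2 rho (Xi p q) =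
    Omega_op rho - Omega_oq rho
    - ((p%:R - q%:R) / (p + q)%:R : algC) *: Omega_g rho.
Proof.
move=> H.
rewrite (@G_Xi p q A rho H).
apply: final.
- exact: (@key p q A rho H).
- exact: (@Op_eq p q A rho H).
- exact: (@Oq_eq p q A rho H).
- exact: (@Og_eq p q A rho H).
Qed.
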